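(* (1) If $\mathfrak G$ is a descriptive $\multimap$-frame, then $\hat\sigma\mathfrak G$ is a descriptive S4K-frame. (2) If $\mathfrak F$ is a descriptive S4K-frame, then $\hat\rho\mathfrak F$ is a descriptive $\multimap$-frame.
   Context: General $\multimap$-frame $(X,\preceq,\sqsubset,P)$: $\preceq$ partial order, $x\preceq y\sqsubset z\Rightarrow x\sqsubset z$, $P$ a family of $\preceq$-upsets containing $X,\emptyset$, closed under $\cap,\cup$, $a\Rightarrow b=\{x\mid\forall y(x\preceq y,y\in a\Rightarrow y\in b)\}$, $a\Rrightarrow b=\{x\mid\forall y(x\sqsubset y,y\in a\Rightarrow y\in b)\}$. It is descriptive if compact (any subfamily of $P\cup\{X\setminus a\mid a\in P\}$ with the finite intersection property has nonempty intersection), $\preceq$-refined ($x\not\preceq y\Rightarrow\exists a\in P$, $x\in a$, $y\notin a$) and $\sqsubset$-refined (not $x\sqsubset y\Rightarrow\exists a,b\in P$ with $x\in a\Rrightarrow b$, $y\in a$, $y\notin b$). General S4K-frame $(X,R_i,R_m,P)$: $R_i$ preorder, $R_m$ binary relation, $P$ Boolean subalgebra of $\mathcal P(X)$ closed under $[i]a=\{x\mid\forall y(xR_iy\Rightarrow y\in a)\}$ and $[m]a$ (likewise with $R_m$). It is descriptive if differentiated ($x\ne y\Rightarrow\exists a\in P$, $x\in a$, $y\notin a$), tight (for $R\in\{R_i,R_m\}$: $xRy$ iff for all $a\in P$, $x\in[R]a$ implies $y\in a$) and compact (every subfamily of $P$ with the finite intersection property has nonempty intersection). $\hat\sigma(X,\preceq,\sqsubset,P):=(X,\preceq,\sqsubset,\hat\sigma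 P)$ with $\hat\sigma P$ the Boolean algebra generated by $P$. For $\mathfrak F=(X,R_i,R_m,P)$: $xR_m^*z$ iff $\exists y(xR_iy\wedge yR_mz)$; $x\sim y$ iff $xR_iy\wedge yR_ix$; $[x]$ its class, $[X]$ the set of classes; $[x][R_i][y]$ iff $xR_iy$; $[x][R_m^*][y]$ iff $xR_m^*y'$ for some $y'\sim y$; $\hat\rho P:=\{\{[x]\mid x\in[i]b\}\mid b\in P\}$; $\hat\rho\mathfrak F:=([X],[R_i],[R_m^*],\hat\rho P)$. *)

(* Defs.v *)
From Stdlib Require Import List.
Import ListNotations.
Set Implicit Arguments.

Section Sets.
Variable X : Type.

Definition fullset : X -> Prop := fun _ => True.
Definition emptyset : X -> Prop := fun _ => False.
Definition setI (a b : X -> Prop) : X -> Prop := fun x => a x /\ b x.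
Definition setU (a b : X -> Prop) : X -> Prop := fun x => a x \/ b x.
Definition setC (a : X -> Prop) : X -> Prop := fun x => ~ a x.

Definition rimp (R : X -> X -> Prop) (a b : X -> Prop) : X -> Prop :=
  fun x => forall y, R x y -> a y -> b y.

Definition box (R : X -> X -> Prop) (a : X -> Prop) : X -> Prop :=
  fun x => forall y, R x y -> a y.

Definition upset (le : X -> X -> Prop) (a : X -> Prop) : Prop :=
  forall x y, le x y -> a x -> a y.

Definition FIP (F : (X -> Prop) -> Prop) : Prop :=
  forall l : list (X -> Prop), (forall a, In a l -> F a) ->
    exists x, forall a, In a l -> a x.

Definition has_nonempty_intersection (F : (X -> Prop) -> Prop) : Prop :=
  exists x, forall a, F a -> a x.

Definition general_mframe (le sq : X -> X -> Prop)
    (P : (X -> Prop) -> Prop) : Prop :=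
  (forall x, le x x) /\
  (forall x y z, le x y -> le y z -> le x z) /\
  (forall x y, le x y -> le y x -> x = y) /\
  (forall x y z, le x y -> sq y z -> sq x z) /\
  (forall a, P a -> upset le a) /\
  P fullset /\ P emptyset /\
  (forall a b, P a -> P b -> P (setI a b)) /\
  (forall a b, P a -> P b -> P (setU a b)) /\
  (forall a b, P a -> P b -> P (rimp le a b)) /\
  (forall a b, P a -> P b -> P (rimp sq a b)).

Definition mframe_compact (P : (X -> Prop) -> Prop) : Prop :=
  forall F : (X -> Prop) -> Prop,
    (forall c, F c -> P c \/ exists a, P a /\ c = setC a) ->
    FIP F -> has_nonempty_intersection F.

Definition descriptive_mframe (le sq : X -> X -> Prop)
    (P : (X -> Prop) -> Prop) : Prop :=
  general_mframe le sq P /\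
  mframe_compact P /\
  (forall x y, ~ le x y -> exists a, P a /\ a x /\ ~ a y) /\
  (forall x y, ~ sq x y ->
     exists a b, P a /\ P b /\ rimp sq a b x /\ a y /\ ~ b y).

Definition boolean_subalgebra (P : (X -> Prop) -> Prop) : Prop :=
  P fullset /\ P emptyset /\
  (forall a, P a -> P (setC a)) /\
  (forall a b, P a -> P b -> P (setI a b)) /\
  (forall a b, P a -> P b -> P (setU a b)).

Definition general_S4K (Ri Rm : X -> X -> Prop)
    (P : (X -> Prop) -> Prop) : Prop :=
  (forall x, Ri x x) /\
  (forall x y z, Ri x y -> Ri y z -> Ri x z) /\
  boolean_subalgebra P /\
  (forall a, P a -> P (box Ri a)) /\
  (forall a, P a -> P (box Rm a)).

Definition tight (R : X -> X -> Prop) (P : (X -> Prop) -> Prop) : Prop :=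
  forall x y, R x y <-> (forall a, P a -> box R a x -> a y).

Definition descriptive_S4K (Ri Rm : X -> X -> Prop)
    (P : (X -> Prop) -> Prop) : Prop :=
  general_S4K Ri Rm P /\
  (forall x y, x <> y -> exists a, P a /\ a x /\ ~ a y) /\
  tight Ri P /\ tight Rm P /\
  (forall F : (X -> Prop) -> Prop,
     (forall c, F c -> P c) -> FIP F -> has_nonempty_intersection F).

(* ---------- sigma-hat: Boolean algebra generated by P ---------- *)
Definition gen_BA (P : (X -> Prop) -> Prop) : (X -> Prop) -> Prop :=
  fun a => forall Q, boolean_subalgebra Q -> (forall b, P b -> Q b) -> Q a.

End Sets.

(* ---------- rho-hat ---------- *)
Unset Implicit Arguments.
Section Rho.
Variables (X : Type) (Ri Rm : X -> X -> Prop) (P : (X -> Prop) -> Prop).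

Definition simR (x y : X) : Prop := Ri x y /\ Ri y x.

Definition Rmstar (x z : X) : Prop := exists y, Ri x y /\ Rm y z.

Definition cls : Type := { C : X -> Prop | exists x, C = simR x }.

Definition cls_of (x : X) : cls := exist _ (simR x) (ex_intro _ x eq_refl).

Definition rho_le (C D : cls) : Prop :=
  exists x y, C = cls_of x /\ D = cls_of y /\ Ri x y.

Definition rho_sq (C D : cls) : Prop :=
  exists x y, C = cls_of x /\ D = cls_of y /\
    exists y', simR y' y /\ Rmstar x y'.

Definition rho_P (A : cls -> Prop) : Prop :=
  exists b, P b /\ A = (fun C => exists x, C = cls_of x /\ box Ri b x).

End Rho.

(* Main.v *)
From mathcomp Require Import all_boot classical_sets boolp.
Require Import Defs.
From Stdlib Require Import List Classical FunctionalExtensionality PropExtensionality ProofIrrelevance.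
Import ListNotations.
Lemma my_zorn (T : Type) (Q : (T -> Prop) -> Prop) :
 (forall C : (T->Prop) -> Prop, (forall G, C G -> Q G) ->
   (forall G H, C G -> C H -> (forall t, G t -> H t) \/ (forall t, H t -> G t)) ->
   Q (fun t => exists G, C G /\ G t)) ->
 exists A, Q A /\ forall B, (forall t, A t -> B t) -> Q B -> forall t, B t -> A t.
Proof.
Local Open Scope classical_set_scope.
move=> H.
have H2 : forall F : set (set T), F `<=` Q -> total_on F subset ->
      Q (\bigcup_(X in F) X).
  move=> F FQ Ft.
  have E : (\bigcup_(X in F) X) = (fun t => exists G, F G /\ G t).
    apply: funext => t; apply: propext; split.
    - by move=> [G CG Gt]; exists G.
    - by move=> [G [CG Gt]]; exists G.
  rewrite E; apply: H; first exact: FQ.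
  move=> G K CG CK; case: (Ft G K CG CK) => h; [left|right]; exact: h.
have [A [QA Am]] := @Zorn_bigcup T Q H2.
exists A; split => // B AB QB t Bt.
apply: contrapT => nAt.
apply: (Am B) => //; split => //; move=> /(_ t Bt); done.
Qed.
Close Scope classical_set_scope.

Lemma sext {X : Type} (a b : X -> Prop) : (forall x, a x <-> b x) -> a = b.
Proof. intro H. apply functional_extensionality; intro x. apply propositional_extensionality. apply H. Qed.

Lemma FIP_mono {X : Type} (F1 F2 : (X -> Prop) -> Prop) :
  (forall c, F1 c -> F2 c) -> FIP F2 -> FIP F1.
Proof. intros H HF l Hl. apply HF. intros a Ha. apply H, Hl, Ha. Qed.

Definition clause {X : Type} (b a : X -> Prop) : X -> Prop := setU (setC b) a.
Fixpoint nf {X : Type} (l : list ((X -> Prop) * (X -> Prop))) : X -> Prop :=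
  match l with
  | [] => (@fullset X)
  | p :: l' => setI (clause (fst p) (snd p)) (nf l')
  end.
Definition isNF {X : Type} (P : (X -> Prop) -> Prop) (c : X -> Prop) : Prop :=
  exists l, (forall p, In p l -> P (fst p) /\ P (snd p)) /\ c = nf l.

Lemma nf_iff {X : Type} (l : list ((X -> Prop) * (X -> Prop))) x :
  nf l x <-> forall p, In p l -> clause (fst p) (snd p) x.
Proof.
  induction l as [|p l IH]; simpl.
  - split; [tauto| intros; exact I].
  - unfold setI. rewrite IH. split.
    + intros [H1 H2] q [<-|Hq]; auto.
    + intros H; split; auto.
Qed.

Lemma nf_app {X : Type} (l m : list ((X -> Prop) * (X -> Prop))) x :
  nf (l ++ m) x <-> nf l x /\ nf m x.
Proof. rewrite !nf_iff. split.
  - intros H; split; intros; apply H; apply in_or_app; auto.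
  - intros [H1 H2] p Hp. apply in_app_or in Hp. destruct Hp; auto. Qed.

Definition pairU {X : Type} (p : (X -> Prop) * (X -> Prop)) (m : list ((X -> Prop) * (X -> Prop))) :=
  map (fun q => (setI (fst p) (fst q), setU (snd p) (snd q))) m.
Fixpoint pairs {X : Type} (l m : list ((X -> Prop) * (X -> Prop))) :=
  match l with [] => [] | p :: l' => pairU p m ++ pairs l' m end.

Lemma clause_U {X : Type} (b a b' a' : X -> Prop) x :
  clause (setI b b') (setU a a') x <-> clause b a x \/ clause b' a' x.
Proof. unfold clause, setU, setI, setC.
  destruct (classic (b x)); destruct (classic (b' x)); tauto. Qed.

Lemma nf_pairU {X : Type} p (m : list ((X -> Prop) * (X -> Prop))) x :
  nf (pairU p m) x <-> clause (fst p) (snd p) x \/ nf m x.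
Proof. induction m as [|q m IH]; simpl.
  - split; [intros; right; exact I| intros; exact I].
  - unfold setI. simpl. rewrite clause_U IH. tauto. Qed.

Lemma nf_pairs {X : Type} (l m : list ((X -> Prop) * (X -> Prop))) x :
  nf (pairs l m) x <-> nf l x \/ nf m x.
Proof. induction l as [|p l IH]; simpl.
  - split; [intros; left; exact I| intros; exact I].
  - rewrite nf_app nf_pairU IH. unfold setI. tauto. Qed.

Lemma isNF_U {X : Type} (P : (X -> Prop) -> Prop) :
  (forall a b, P a -> P b -> P (setI a b)) -> (forall a b, P a -> P b -> P (setU a b)) ->
  forall c d, isNF P c -> isNF P d -> isNF P (setU c d).
Proof.
  intros HI HU c d [l [Hl ->]] [m [Hm ->]].
  exists (pairs l m). split.
  - clear -HI HU Hl Hm. induction l as [|p l IH]; simpl; [tauto|].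
    intros q Hq. apply in_app_or in Hq. destruct Hq as [Hq|Hq].
    + unfold pairU in Hq. apply in_map_iff in Hq. destruct Hq as [r [<- Hr]]. simpl.
      destruct (Hl p (or_introl Logic.eq_refl)). destruct (Hm r Hr). split; auto.
    + apply IH; auto. intros; apply Hl; simpl; auto.
  - apply sext. intro x. rewrite nf_pairs. unfold setU. tauto.
Qed.

Lemma isNF_C {X : Type} (P : (X -> Prop) -> Prop) :
  P ((@fullset X)) -> P ((@emptyset X)) ->
  (forall a b, P a -> P b -> P (setI a b)) -> (forall a b, P a -> P b -> P (setU a b)) ->
  forall c, isNF P c -> isNF P (setC c).
Proof.
  intros HF HE HI HU c [l [Hl ->]].
  induction l as [|p l IH].
  - exists [((@fullset X), (@emptyset X))]. split.
    + intros p [<-|[]]; simpl; auto.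
    + apply sext; intro x. simpl. unfold setC, setI, clause, setU, setC, fullset, emptyset. tauto.
  - assert (E : setC (nf (p :: l)) = setU (nf [((@fullset X), fst p); (snd p, (@emptyset X))]) (setC (nf l))).
    { apply sext; intro x. simpl. unfold setC, setI, clause, setU, setC, fullset, emptyset.
      destruct (classic (fst p x)); destruct (classic (snd p x)); tauto. }
    rewrite E. apply isNF_U; auto.
    + exists [((@fullset X), fst p); (snd p, (@emptyset X))]. split; auto.
      destruct (Hl p (or_introl Logic.eq_refl)).
      intros q [<-|[<-|[]]]; simpl; auto.
    + apply IH. intros; apply Hl; simpl; auto.
Qed.

Lemma gen_BA_BA {X : Type} (P : (X -> Prop) -> Prop) : boolean_subalgebra (gen_BA P).
Proof.
  unfold gen_BA. repeat split.
  - intros Q HQ _. apply HQ.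
  - intros Q HQ _. apply HQ.
  - intros a Ha Q HQ HPQ. apply HQ. apply Ha; auto.
  - intros a b Ha Hb Q HQ HPQ. apply HQ; [apply Ha|apply Hb]; auto.
  - intros a b Ha Hb Q HQ HPQ. apply HQ; [apply Ha|apply Hb]; auto.
Qed.

Lemma gen_BA_incl {X : Type} (P : (X -> Prop) -> Prop) a : P a -> gen_BA P a.
Proof. intros Ha Q _ H. auto. Qed.

Lemma NF_BA {X : Type} (P : (X -> Prop) -> Prop) :
  P ((@fullset X)) -> P ((@emptyset X)) ->
  (forall a b, P a -> P b -> P (setI a b)) -> (forall a b, P a -> P b -> P (setU a b)) ->
  boolean_subalgebra (isNF P).
Proof.
  intros HF HE HI HU. repeat split.
  - exists []. split; [simpl; tauto| reflexivity].
  - exists [((@fullset X), (@emptyset X))]. split.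
    + intros p [<-|[]]; simpl; auto.
    + apply sext; intro x. simpl. unfold setI, clause, setU, setC, fullset, emptyset. tauto.
  - apply isNF_C; auto.
  - intros a b [l [Hl ->]] [m [Hm ->]]. exists (l ++ m). split.
    + intros p Hp. apply in_app_or in Hp. destruct Hp; auto.
    + apply sext; intro x. rewrite nf_app. unfold setI. tauto.
  - apply isNF_U; auto.
Qed.

Lemma P_NF {X : Type} (P : (X -> Prop) -> Prop) : P ((@fullset X)) -> forall a, P a -> isNF P a.
Proof. intros HF a Ha. exists [((@fullset X), a)]. split.
  - intros p [<-|[]]; simpl; auto.
  - apply sext; intro x. simpl. unfold setI, clause, setU, setC, fullset. tauto. Qed.

Lemma gen_NF {X : Type} (P : (X -> Prop) -> Prop) :
  P ((@fullset X)) -> P ((@emptyset X)) ->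
  (forall a b, P a -> P b -> P (setI a b)) -> (forall a b, P a -> P b -> P (setU a b)) ->
  forall c, gen_BA P c -> isNF P c.
Proof. intros HF HE HI HU c Hc. apply Hc. apply NF_BA; auto. apply P_NF; auto. Qed.

Lemma NF_gen {X : Type} (P : (X -> Prop) -> Prop) c : isNF P c -> gen_BA P c.
Proof.
  intros [l [Hl ->]]. destruct (gen_BA_BA P) as [HF [HE [HC [HI HU]]]].
  induction l as [|p l IH]; simpl; auto.
  destruct (Hl p (or_introl Logic.eq_refl)).
  apply HI. apply HU. apply HC; apply gen_BA_incl; auto. apply gen_BA_incl; auto.
  apply IH; intros; apply Hl; simpl; auto.
Qed.

Lemma box_nf {X : Type} (R : X -> X -> Prop) (l : list ((X -> Prop) * (X -> Prop))) x :
  box R (nf l) x <-> forall p, In p l -> rimp R (fst p) (snd p) x.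
Proof. unfold box, rimp. split.
  - intros H p Hp y Hxy Hb. specialize (H y Hxy). rewrite nf_iff in H.
    destruct (H p Hp); [contradiction|auto].
  - intros H y Hxy. rewrite nf_iff. intros p Hp. unfold clause, setU, setC.
    destruct (classic (fst p y)); [right; eapply H; eauto|left; auto]. Qed.

Lemma box_NF {X : Type} (P : (X -> Prop) -> Prop) (R : X -> X -> Prop) :
  (forall a b, P a -> P b -> P (rimp R a b)) -> forall c, isNF P c -> gen_BA P (box R c).
Proof.
  intros HR c [l [Hl ->]]. destruct (gen_BA_BA P) as [HF [HE [HC [HI HU]]]].
  assert (E : box R (nf l) = fold_right (fun p acc => setI (rimp R (fst p) (snd p)) acc) ((@fullset X)) l).
  { apply sext; intro x. rewrite box_nf. clear. induction l as [|p l IH]; simpl.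
    - unfold fullset; tauto.
    - unfold setI. rewrite -IH. split.
      + intros H; split; auto.
      + intros [H1 H2] q [<-|Hq]; auto. }
  rewrite E. clear E. induction l as [|p l IH]; simpl; auto.
  destruct (Hl p (or_introl Logic.eq_refl)).
  apply HI. apply gen_BA_incl; auto. apply IH; intros; apply Hl; simpl; auto.
Qed.
Lemma chain_list {T : Type} (F : T -> Prop) (C : (T -> Prop) -> Prop) :
  (forall G H, C G -> C H -> (forall t, G t -> H t) \/ (forall t, H t -> G t)) ->
  forall l, (forall c, In c l -> F c \/ exists G, C G /\ G c) ->
  (forall c, In c l -> F c) \/ exists G, C G /\ forall c, In c l -> F c \/ G c.
Proof.
  intros Htot l. induction l as [|d l IH]; intros Hl.
  - left; intros c [].
  - destruct IH as [IH|[G [CG HG]]]. { intros; apply Hl; simpl; auto. }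
    + destruct (Hl d (or_introl Logic.eq_refl)) as [Fd|[G [CG Gd]]].
      * left. intros c [<-|Hc]; auto.
      * right. exists G. split; auto. intros c [<-|Hc]; auto.
    + right. destruct (Hl d (or_introl Logic.eq_refl)) as [Fd|[G' [CG' Gd]]].
      * exists G; split; auto. intros c [<-|Hc]; auto.
      * destruct (Htot G G' CG CG') as [S|S].
        -- exists G'; split; auto. intros c [<-|Hc]; auto. destruct (HG c Hc); auto.
        -- exists G; split; auto. intros c [<-|Hc]; auto.
Qed.

Lemma notFIP_add {X : Type} (M : (X -> Prop) -> Prop) c :
  ~ FIP (fun d => M d \/ d = c) ->
  exists l, (forall d, In d l -> M d) /\ forall x, (forall d, In d l -> d x) -> ~ c x.
Proof.
  intros H. unfold FIP in H. apply not_all_ex_not in H. destruct H as [l1 H].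
  apply imply_to_and in H. destruct H as [Hl1 Hno].
  assert (G : exists l, (forall d, In d l -> M d) /\
             forall x, (forall d, In d l -> d x) -> c x -> forall d, In d l1 -> d x).
  { clear Hno. induction l1 as [|d l1 IH].
    - exists []. split; [intros _ []| intros x _ _ _ []].
    - assert (IH' : forall c0, In c0 l1 -> M c0 \/ c0 = c) by (intros; apply Hl1; simpl; auto).
      destruct (IH IH') as [l [Hl Hx]].
      destruct (Hl1 d (or_introl Logic.eq_refl)) as [Md| ->].
      + exists (d :: l). split.
        * intros e [<-|He]; auto.
        * intros x Hall cx e [<-|He].
          -- apply Hall; simpl; auto.
          -- apply Hx; auto. intros; apply Hall; simpl; auto.
      + exists l. split; auto. intros x Hall cx e [<-|He].
          -- exact cx.
          -- apply Hx; auto. }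
  destruct G as [l [Hl Hx]]. exists l. split; auto.
  intros x Hall cx. apply Hno. exists x. apply Hx; auto.
Qed.

Lemma comp1 {X : Type} (le sq : X -> X -> Prop) (P : (X -> Prop) -> Prop) :
  descriptive_mframe le sq P ->
  forall F : (X -> Prop) -> Prop,
     (forall c, F c -> gen_BA P c) -> FIP F -> has_nonempty_intersection F.
Proof.
  intros [[_ [_ [_ [_ [_ [HF [HE [HI [HU _]]]]]]]]] [Hcomp _]] F HFG HFIP.
  destruct (gen_BA_BA P) as [GF [GE [GC [GI GU]]]].
  pose (Q := fun A : (X -> Prop) -> Prop =>
          (forall c, A c -> gen_BA P c) /\ FIP (fun c => F c \/ A c)).
  destruct (@my_zorn (X -> Prop) Q) as [A [[QA1 QA2] Amax]].
  { intros C HCQ Htot. split.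
    - intros c [G [CG Gc]]. apply (HCQ G CG); auto.
    - intros l Hl. destruct (chain_list F C Htot l Hl) as [Hf|[G [CG HG]]].
      + apply HFIP; auto.
      + apply (proj2 (HCQ G CG)); auto. }
  pose (M := fun c => F c \/ A c).
  assert (m2 : forall c, gen_BA P c -> FIP (fun d => M d \/ d = c) -> A c).
  { intros c Gc Hc. apply (Amax (fun d => A d \/ d = c)); auto.
    - split.
      + intros d [Ad| ->]; auto.
      + eapply FIP_mono; [|exact Hc]. unfold M. intros d; tauto. }
  assert (m3 : forall c, gen_BA P c -> M c \/ M (setC c)).
  { intros c Gc. apply NNPP. intros Hn.
    assert (N1 : ~ FIP (fun d => M d \/ d = c)).
    { intros H1. apply Hn. left. right. apply m2; auto. }
    assert (N2 : ~ FIP (fun d => M d \/ d = setC c)).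
    { intros H1. apply Hn. right. right. apply m2; auto. }
    apply notFIP_add in N1. apply notFIP_add in N2.
    destruct N1 as [l1 [H1 K1]]. destruct N2 as [l2 [H2 K2]].
    destruct (QA2 (l1 ++ l2)) as [x Hx].
    { intros d Hd. apply in_app_or in Hd. destruct Hd; [apply H1|apply H2]; auto. }
    apply (K2 x).
    - intros d Hd; apply Hx; apply in_or_app; auto.
    - apply (K1 x). intros d Hd; apply Hx; apply in_or_app; auto. }
  assert (m4 : forall c d, M c -> gen_BA P d -> (forall x, c x -> d x) -> M d).
  { intros c d Mc Gd Hcd. destruct (m3 d Gd) as [|Md]; auto.
    destruct (QA2 [c; setC d]) as [x Hx].
    { intros e [<-|[<-|[]]]; auto. }
    exfalso. apply (Hx (setC d)); simpl; auto. apply Hcd. apply Hx; simpl; auto. }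
  destruct (Hcomp (fun c => M c /\ (P c \/ exists a, P a /\ c = setC a))) as [x Hx].
  { intros c [_ H]; auto. }
  { eapply FIP_mono; [|exact QA2]. intros c [Mc _]; auto. }
  exists x. intros c Fc.
  destruct (gen_NF P HF HE HI HU c (HFG c Fc)) as [l [Hl ->]].
  apply nf_iff. intros [b a] Hp. simpl.
  destruct (Hl _ Hp) as [Pb Pa]. simpl in Pb, Pa.
  assert (Mcl : M (clause b a)).
  { apply (m4 (nf l)). left; auto.
    apply GU; [apply GC|]; apply gen_BA_incl; auto.
    intros y Hy. rewrite nf_iff in Hy. apply (Hy _ Hp). }
  destruct (m3 a (gen_BA_incl P a Pa)) as [Ma|Mna].
  { right. apply Hx. split; auto. }
  destruct (m3 b (gen_BA_incl P b Pb)) as [Mb|Mnb].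
  - exfalso. destruct (QA2 [b; setC a; clause b a]) as [y Hy].
    { intros e [<-|[<-|[<-|[]]]]; auto. }
    destruct (Hy (clause b a)) as [H|H]; simpl; auto.
    + apply H, Hy; simpl; auto.
    + apply (Hy (setC a)); simpl; auto.
  - left. apply (Hx (setC b)). split; auto. right. exists b; auto.
Qed.

Lemma part1 (X : Type) (le sq : X -> X -> Prop) (P : (X -> Prop) -> Prop) :
  descriptive_mframe le sq P -> descriptive_S4K le sq (gen_BA P).
Proof.
  intros HD. pose proof HD as HD0.
  destruct HD as [[Hr [Ht [Ha [Hls [Hup [HF [HE [HI [HU [Hrl Hrs]]]]]]]]]] [Hcomp [Hle Hsq]]].
  destruct (gen_BA_BA P) as [GF [GE [GC [GI GU]]]].
  split; [|split; [|split; [|split]]].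
  - split; [exact Hr|split; [exact Ht|split; [apply gen_BA_BA|split]]].
    + intros a Ga. apply box_NF; auto. apply gen_NF; auto.
    + intros a Ga. apply box_NF; auto. apply gen_NF; auto.
  - intros x y Hxy. destruct (classic (le x y)) as [Hxy'|Hxy'].
    + destruct (classic (le y x)) as [Hyx|Hyx].
      * exfalso; apply Hxy; apply Ha; auto.
      * destruct (Hle y x Hyx) as [a [Pa [ay nax]]].
        exists (setC a). split; [apply GC, gen_BA_incl; auto|]. unfold setC; tauto.
    + destruct (Hle x y Hxy') as [a [Pa [ax nay]]].
      exists a. split; [apply gen_BA_incl; auto| auto].
  - intros x y. split.
    + intros Hxy a _ Hb. apply Hb; auto.
    + intros H. apply NNPP. intros Hn. destruct (Hle x y Hn) as [a [Pa [ax nay]]].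
      apply nay. apply H. apply gen_BA_incl; auto.
      intros z Hz. apply (Hup a Pa x z); auto.
  - intros x y. split.
    + intros Hxy a _ Hb. apply Hb; auto.
    + intros H. apply NNPP. intros Hn. destruct (Hsq x y Hn) as [a [b [Pa [Pb [Hx [ay nby]]]]]].
      assert (Hc : (clause a b) y).
      { apply H. apply GU; [apply GC|]; apply gen_BA_incl; auto.
        intros z Hz. unfold clause, setU, setC. destruct (classic (a z)); [right|left]; auto. }
      destruct Hc as [Hc|Hc]; auto.
  - intros F HF' HFIP. apply (comp1 le sq P HD0 F HF' HFIP).
Qed.

Lemma cls_ext (X : Type) (Ri : X -> X -> Prop) (C D : cls X Ri) :
  proj1_sig C = proj1_sig D -> C = D.
Proof. destruct C as [C HC], D as [D HD]; simpl. intros ->. f_equal. apply proof_irrelevance. Qed.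

Lemma cls_rep (X : Type) (Ri : X -> X -> Prop) (C : cls X Ri) : exists x, C = cls_of X Ri x.
Proof. destruct C as [C [x Hx]]. exists x. apply cls_ext. simpl. exact Hx. Qed.

Lemma cls_eq (X : Type) (Ri : X -> X -> Prop) :
  (forall x y z, Ri x y -> Ri y z -> Ri x z) ->
  forall x y, simR X Ri x y -> cls_of X Ri x = cls_of X Ri y.
Proof. intros Ht x y [H1 H2]. apply cls_ext. simpl. apply sext. intro z. unfold simR.
  split; intros [A B]; split; eauto. Qed.

Lemma cls_inv (X : Type) (Ri : X -> X -> Prop) :
  (forall x, Ri x x) ->
  forall x y, cls_of X Ri x = cls_of X Ri y -> simR X Ri x y.
Proof. intros Hr x y E. apply (f_equal (@proj1_sig _ _)) in E. simpl in E.
  rewrite E. split; auto. Qed.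

Definition Aset (X : Type) (Ri : X -> X -> Prop) (b : X -> Prop) : cls X Ri -> Prop :=
  fun C => exists x, C = cls_of X Ri x /\ box Ri b x.

Lemma Aset_cls (X : Type) (Ri : X -> X -> Prop) :
  (forall x, Ri x x) -> (forall x y z, Ri x y -> Ri y z -> Ri x z) ->
  forall b x, Aset X Ri b (cls_of X Ri x) <-> box Ri b x.
Proof. intros Hr Ht b x. split.
  - intros [x' [E Hb]]. apply cls_inv in E; auto. destruct E as [E1 E2].
    intros z Hz. apply Hb. eauto.
  - intros H. exists x; split; auto. Qed.

Lemma cls_set_ext (X : Type) (Ri : X -> X -> Prop) (A B : cls X Ri -> Prop) :
  (forall x, A (cls_of X Ri x) <-> B (cls_of X Ri x)) -> A = B.
Proof. intros H. apply sext. intros C. destruct (cls_rep X Ri C) as [x ->]. apply H. Qed.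

Lemma rho_le_cls (X : Type) (Ri : X -> X -> Prop) :
  (forall x, Ri x x) -> (forall x y z, Ri x y -> Ri y z -> Ri x z) ->
  forall x y, rho_le X Ri (cls_of X Ri x) (cls_of X Ri y) <-> Ri x y.
Proof. intros Hr Ht x y. split.
  - intros [x' [y' [E1 [E2 H]]]]. apply cls_inv in E1; auto. apply cls_inv in E2; auto.
    destruct E1, E2. eauto.
  - intros H. exists x, y. auto. Qed.

Lemma rho_sq_cls (X : Type) (Ri Rm : X -> X -> Prop) :
  (forall x, Ri x x) -> (forall x y z, Ri x y -> Ri y z -> Ri x z) ->
  forall x D, rho_sq X Ri Rm (cls_of X Ri x) D <->
     exists y', Rmstar X Ri Rm x y' /\ D = cls_of X Ri y'.
Proof. intros Hr Ht x D. split.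
  - intros [x' [y [E1 [E2 [y' [Hs [w [H1 H2]]]]]]]]. apply cls_inv in E1; auto.
    exists y'. split.
    + exists w. destruct E1. split; eauto.
    + rewrite E2. symmetry. apply cls_eq; auto.
  - intros [y' [H ->]]. exists x, y'. split; auto. split; auto. exists y'. split; auto.
    split; auto. Qed.

Lemma box_upset (X : Type) (Ri : X -> X -> Prop) :
  (forall x, Ri x x) -> (forall x y z, Ri x y -> Ri y z -> Ri x z) ->
  forall U, (forall x y, Ri x y -> U x -> U y) -> forall x, box Ri U x <-> U x.
Proof. intros Hr Ht U HU x. split; [intros H; apply H; auto| intros H y Hy; eauto]. Qed.

Lemma box_mono (X : Type) (R : X -> X -> Prop) (a b : X -> Prop) :
  (forall x, a x -> b x) -> forall x, box R a x -> box R b x.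
Proof. intros H x Hx y Hy; auto. Qed.

Lemma box_I (X : Type) (R : X -> X -> Prop) (a b : X -> Prop) x :
  box R (setI a b) x <-> box R a x /\ box R b x.
Proof. unfold box, setI. split; [intros H; split; intros; apply H; auto| intros [H1 H2] y Hy; auto]. Qed.

Lemma box_box_up (X : Type) (Ri : X -> X -> Prop) :
  (forall x y z, Ri x y -> Ri y z -> Ri x z) ->
  forall a x y, Ri x y -> box Ri a x -> box Ri a y.
Proof. intros Ht a x y Hxy H z Hz. apply H; eauto. Qed.

Lemma notFIP_of {X : Type} (P : (X -> Prop) -> Prop) :
  (forall F : (X -> Prop) -> Prop, (forall c, F c -> P c) -> FIP F -> has_nonempty_intersection F) ->
  forall F, (forall c, F c -> P c) -> (forall x, ~ forall c, F c -> c x) ->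
  exists l, (forall c, In c l -> F c) /\ forall x, ~ forall c, In c l -> c x.
Proof.
  intros HC F HF Hno. apply NNPP. intros Hn.
  destruct (HC F HF) as [x Hx].
  - intros l Hl. apply NNPP. intros H2. apply Hn. exists l. split; auto.
    intros x Hx. apply H2. exists x; auto.
  - apply (Hno x Hx).
Qed.

Lemma closed_Rmstar (X : Type) (Ri Rm : X -> X -> Prop) (P : (X -> Prop) -> Prop) :
  descriptive_S4K Ri Rm P ->
  forall x z, ~ Rmstar X Ri Rm x z ->
  exists e, P e /\ box Ri (box Rm e) x /\ ~ e z.
Proof.
  intros [[Hr [Ht [[PF [PE [PC [PI PU]]]] [PBi PBm]]]] [_ [Ti [Tm HC]]]] x z Hn.
  pose (G := fun s => (P s /\ box Ri s x) \/ (exists e, P e /\ ~ e z /\ s = setC (box Rm e))).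
  destruct (notFIP_of P HC G) as [l [Hl Hno]].
  - intros s [[Ps _]|[e [Pe [_ ->]]]]; auto.
  - intros w Hw. apply Hn. exists w. split.
    + apply Ti. intros a Pa Ha. apply Hw. left; auto.
    + apply Tm. intros e Pe He. apply NNPP. intros ne.
      apply (Hw (setC (box Rm e))); auto. right. exists e; auto.
  - assert (K : exists a e, P a /\ P e /\ box Ri a x /\ ~ e z /\
              forall w, a w -> ~ box Rm e w -> forall s, In s l -> s w).
    { clear Hno. induction l as [|s l IH].
      - exists (@fullset X), (@emptyset X). repeat split; auto;
        intros; repeat match goal with H : In _ [] |- _ => destruct H | H : emptyset _ |- _ => destruct H end;
        try exact I.
      - assert (IH' : forall c, In c l -> G c) by (intros; apply Hl; simpl; auto).
        destruct (IH IH') as [a [e [Pa [Pe [Ha [He Hw]]]]]].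
        destruct (Hl s (or_introl Logic.eq_refl)) as [[Ps Hs]|[e1 [Pe1 [He1 ->]]]].
        + exists (setI a s), e. refine (conj _ (conj _ (conj _ (conj _ _)))); auto.
          * apply box_I; auto.
          * intros w [aw sw] nb t [Et|Ht']; [subst t; exact sw | exact (Hw w aw nb t Ht')].
        + exists a, (setU e e1). refine (conj _ (conj _ (conj _ (conj _ _)))); auto.
          * unfold setU; intros [H|H]; auto.
          * intros w aw nb t [Et|Ht'].
            -- subst t. intros Hb. apply nb. intros y Hy. right. apply Hb; auto.
            -- apply Hw; auto. intros Hb. apply nb. intros y Hy. left. apply Hb; auto. }
    destruct K as [a [e [Pa [Pe [Ha [He Hw]]]]]].
    exists e. split; auto. split; auto.
    intros w Hxw. apply NNPP. intros nb. apply (Hno w). apply Hw; auto.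
Qed.

Lemma sep_lemma (X : Type) (Ri Rm : X -> X -> Prop) (P : (X -> Prop) -> Prop) :
  descriptive_S4K Ri Rm P ->
  forall x y, (forall y', simR X Ri y' y -> ~ Rmstar X Ri Rm x y') ->
  exists a b, P a /\ P b /\ box Ri a y /\ ~ box Ri b y /\
     forall z, Rmstar X Ri Rm x z -> box Ri a z -> box Ri b z.
Proof.
  intros HD x y Hn. pose proof (closed_Rmstar X Ri Rm P HD x) as Hcl.
  destruct HD as [[Hr [Ht [[PF [PE [PC [PI PU]]]] [PBi PBm]]]] [_ [Ti [Tm HC]]]].
  pose (G := fun s => (P s /\ forall z, Rmstar X Ri Rm x z -> s z) \/
                      (exists a, P a /\ box Ri a y /\ s = box Ri a) \/
                      (exists b, P b /\ ~ box Ri b y /\ s = setC (box Ri b))).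
  destruct (notFIP_of P HC G) as [l [Hl Hno]].
  - intros s [[Ps _]|[[a [Pa [_ ->]]]|[b [Pb [_ ->]]]]]; auto.
  - intros z Hz.
    assert (Rz : Rmstar X Ri Rm x z).
    { apply NNPP. intros nR. destruct (Hcl z nR) as [e [Pe [He ne]]].
      apply ne. apply Hz. left. split; auto. intros z' [w [H1 H2]]. apply (He w H1 z' H2). }
    destruct (classic (Ri y z)) as [Hyz|Hyz].
    + destruct (classic (Ri z y)) as [Hzy|Hzy].
      * apply (Hn z); auto. split; auto.
      * apply Hzy. apply Ti. intros b Pb Hb. apply NNPP. intros nb.
        assert (nby : ~ box Ri b y) by (intros Hb'; apply nb, Hb', Hr).
        apply (Hz (setC (box Ri b))); auto. right; right. exists b; auto.
    + apply Hyz. apply Ti. intros a Pa Ha.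
      apply (Hz (box Ri a)). right; left. exists a; auto. apply Hr.
  - assert (K : exists a b, P a /\ P b /\ box Ri a y /\ ~ box Ri b y /\
              forall z, Rmstar X Ri Rm x z -> box Ri a z -> ~ box Ri b z -> forall s, In s l -> s z).
    { clear Hno. induction l as [|s l IH].
      - exists (@fullset X), (@emptyset X). repeat split; auto;
        intros; repeat match goal with H : In _ [] |- _ => destruct H | H : emptyset _ |- _ => destruct H
            | H : box Ri emptyset y |- _ => destruct (H y (Hr y)) end;
        try exact I; try (let H := fresh in intro H; destruct (H y (Hr y))).
      - assert (IH' : forall c, In c l -> G c) by (intros; apply Hl; simpl; auto).
        destruct (IH IH') as [a [b [Pa [Pb [Ha [Hb Hw]]]]]].
        destruct (Hl s (or_introl Logic.eq_refl)) as [[Ps Hs]|[[a1 [Pa1 [Ha1 ->]]]|[b1 [Pb1 [Hb1 ->]]]]].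
        + exists a, b. refine (conj Pa (conj Pb (conj Ha (conj Hb _)))).
          intros w Rw aw nb t [Et|Ht'].
          * subst t. apply Hs; exact Rw.
          * exact (Hw w Rw aw nb t Ht').
        + exists (setI a a1), b. refine (conj (PI _ _ Pa Pa1) (conj Pb (conj _ (conj Hb _)))).
          * apply box_I; auto.
          * intros w Rw aw nb t [Et|Ht']; apply box_I in aw; destruct aw as [aw a1w].
            -- subst t. exact a1w.
            -- exact (Hw w Rw aw nb t Ht').
        + assert (Eb : forall v, box Ri (setU (box Ri b) (box Ri b1)) v <-> box Ri b v \/ box Ri b1 v).
          { intro v. apply (box_upset X Ri Hr Ht).
            intros u v' Huv [H1|H1]; [left|right]; eapply box_box_up; eauto. }
          exists a, (setU (box Ri b) (box Ri b1)).
          refine (conj Pa (conj (PU _ _ (PBi _ Pb) (PBi _ Pb1)) (conj Ha (conj _ _)))).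
          * rewrite Eb. intros [H|H]; auto.
          * intros w Rw aw nb t [Et|Ht'].
            -- subst t. intros Hb'. apply nb. apply Eb. right. exact Hb'.
            -- apply (Hw w Rw aw); auto. intros Hb'. apply nb. apply Eb. left. exact Hb'. }
    destruct K as [a [b [Pa [Pb [Ha [Hb Hw]]]]]].
    exists a, b. repeat split; auto.
    intros z Rz az. apply NNPP. intros nb. apply (Hno z). apply Hw; auto.
Qed.

Lemma rho_compact (X : Type) (Ri Rm : X -> X -> Prop) (P : (X -> Prop) -> Prop) :
  descriptive_S4K Ri Rm P -> mframe_compact (rho_P X Ri P).
Proof.
  intros HD. destruct HD as [[Hr [Ht [[PF [PE [PC [PI PU]]]] [PBi PBm]]]] [_ [Ti [Tm HC]]]].
  intros F HF HFIP.
  pose (F' := fun e => exists c b, F c /\ P b /\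
      ((c = Aset X Ri b /\ e = box Ri b) \/ (c = setC (Aset X Ri b) /\ e = setC (box Ri b)))).
  assert (Key : forall c b e, ((c = Aset X Ri b /\ e = box Ri b) \/ (c = setC (Aset X Ri b) /\ e = setC (box Ri b))) ->
              forall x, c (cls_of X Ri x) <-> e x).
  { intros c b e [[-> ->]|[-> ->]] x.
    - apply Aset_cls; auto.
    - unfold setC. rewrite (Aset_cls X Ri Hr Ht). tauto. }
  destruct (HC F') as [x Hx].
  - intros e [c [b [_ [Pb [[_ ->]|[_ ->]]]]]]; auto.
  - intros l Hl.
    assert (L : exists lc, (forall c, In c lc -> F c) /\
               forall x, (forall c, In c lc -> c (cls_of X Ri x)) -> forall e, In e l -> e x).
    { induction l as [|e l IH].
      - exists []. split; [intros _ []|intros x _ _ []].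
      - assert (IH' : forall c, In c l -> F' c) by (intros; apply Hl; simpl; auto).
        destruct (IH IH') as [lc [Hlc Hx]].
        destruct (Hl e (or_introl Logic.eq_refl)) as [c [b [Fc [Pb Hcb]]]].
        exists (c :: lc). split.
        + intros d [<-|Hd]; auto.
        + intros x Hall d [Ed|Hd].
          * subst d. apply (Key c b e Hcb). apply Hall; simpl; auto.
          * apply Hx; auto. intros; apply Hall; simpl; auto. }
    destruct L as [lc [Hlc Hx]].
    destruct (HFIP lc Hlc) as [C HCc]. destruct (cls_rep X Ri C) as [x ->].
    exists x. apply Hx; auto.
  - exists (cls_of X Ri x). intros c Fc.
    destruct (HF c Fc) as [[b [Pb Ec]]|[a [[b [Pb Ea]] Ec]]].
    + assert (Hcb : (c = Aset X Ri b /\ box Ri b = box Ri b) \/ (c = setC (Aset X Ri b) /\ box Ri b = setC (box Ri b))).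
      { left; split; auto. }
      apply (Key c b (box Ri b) Hcb). apply Hx. exists c, b. auto.
    + assert (Hcb : (c = Aset X Ri b /\ setC (box Ri b) = box Ri b) \/ (c = setC (Aset X Ri b) /\ setC (box Ri b) = setC (box Ri b))).
      { right; split; auto. rewrite Ec Ea. reflexivity. }
      apply (Key c b (setC (box Ri b)) Hcb). apply Hx. exists c, b. auto.
Qed.

Lemma boxU_up (X : Type) (Ri : X -> X -> Prop) :
  (forall x, Ri x x) -> (forall x y z, Ri x y -> Ri y z -> Ri x z) ->
  forall b b' v, box Ri (setU (box Ri b) (box Ri b')) v <-> box Ri b v \/ box Ri b' v.
Proof. intros Hr Ht b b' v. apply (box_upset X Ri Hr Ht).
  intros u v' Huv [H1|H1]; [left|right]; eapply box_box_up; eauto. Qed.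

Lemma part2 (X : Type) (Ri Rm : X -> X -> Prop) (P : (X -> Prop) -> Prop) :
  descriptive_S4K Ri Rm P ->
  descriptive_mframe (rho_le X Ri) (rho_sq X Ri Rm) (rho_P X Ri P).
Proof.
  intros HD. pose proof HD as HD0.
  destruct HD as [[Hr [Ht [[PF [PE [PC [PI PU]]]] [PBi PBm]]]] [_ [Ti [Tm HC]]]].
  pose proof (Aset_cls X Ri Hr Ht) as AC.
  pose proof (rho_le_cls X Ri Hr Ht) as LC.
  pose proof (rho_sq_cls X Ri Rm Hr Ht) as SC.
  assert (rhoP : forall b, P b -> rho_P X Ri P (Aset X Ri b)).
  { intros b Pb. exists b. split; auto. }
  split; [|split; [|split]].
  - split; [|split; [|split; [|split; [|split; [|split; [|split; [|split; [|split; [|split]]]]]]]]].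
    + intros C. destruct (cls_rep X Ri C) as [x ->]. apply LC; auto.
    + intros C D E. destruct (cls_rep X Ri C) as [x ->]. destruct (cls_rep X Ri D) as [y ->].
      destruct (cls_rep X Ri E) as [z ->]. rewrite !LC. eauto.
    + intros C D. destruct (cls_rep X Ri C) as [x ->]. destruct (cls_rep X Ri D) as [y ->].
      rewrite !LC. intros H1 H2. apply cls_eq; auto. split; auto.
    + intros C D E. destruct (cls_rep X Ri C) as [x ->]. destruct (cls_rep X Ri D) as [y ->].
      rewrite LC. intros Hxy HyE. apply SC in HyE. destruct HyE as [y' [[w [H1 H2]] ->]].
      apply SC. exists y'. split; auto. exists w. split; eauto.
    + intros A [b [Pb ->]] C D. fold (Aset X Ri b).
      destruct (cls_rep X Ri C) as [x ->]. destruct (cls_rep X Ri D) as [y ->].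
      rewrite LC. intros Hxy Hx. apply AC. apply AC in Hx. eapply box_box_up; eauto.
    + assert (E : Aset X Ri (@fullset X) = @fullset (cls X Ri)).
      { apply cls_set_ext. intros x. rewrite AC.
        split; intros _; [exact I| intros y _; exact I]. }
      rewrite -E. apply rhoP; auto.
    + assert (E : Aset X Ri (@emptyset X) = @emptyset (cls X Ri)).
      { apply cls_set_ext. intros x. rewrite AC.
        split; [intros H; destruct (H x (Hr x))|intros []]. }
      rewrite -E. apply rhoP; auto.
    + intros A B [b [Pb ->]] [b' [Pb' ->]]. fold (Aset X Ri b). fold (Aset X Ri b').
      assert (E : Aset X Ri (setI b b') = setI (Aset X Ri b) (Aset X Ri b')).
      { apply cls_set_ext. intros x. unfold setI at 2. rewrite !AC box_I. tauto. }
      rewrite -E. apply rhoP; auto.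
    + intros A B [b [Pb ->]] [b' [Pb' ->]]. fold (Aset X Ri b). fold (Aset X Ri b').
      assert (E : Aset X Ri (setU (box Ri b) (box Ri b')) = setU (Aset X Ri b) (Aset X Ri b')).
      { apply cls_set_ext. intros x. unfold setU at 2. rewrite !AC boxU_up; auto. tauto. }
      rewrite -E. apply rhoP; auto.
    + intros A B [a [Pa ->]] [b [Pb ->]]. fold (Aset X Ri a). fold (Aset X Ri b).
      assert (E : Aset X Ri (setU (setC (box Ri a)) (box Ri b)) = rimp (rho_le X Ri) (Aset X Ri a) (Aset X Ri b)).
      { apply cls_set_ext. intros x. rewrite AC. unfold rimp. split.
        * intros H D. destruct (cls_rep X Ri D) as [y ->]. rewrite LC. intros Hxy Ha.
          apply AC in Ha. apply AC. destruct (H y Hxy) as [H'|H']; [contradiction|auto].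
        * intros H y Hxy. unfold setU, setC. destruct (classic (box Ri a y)) as [Ha|Ha]; [right|left; auto].
          apply AC. apply H; [apply LC; auto| apply AC; auto]. }
      rewrite -E. apply rhoP; auto.
    + intros A B [a [Pa ->]] [b [Pb ->]]. fold (Aset X Ri a). fold (Aset X Ri b).
      assert (E : Aset X Ri (box Rm (setU (setC (box Ri a)) (box Ri b))) = rimp (rho_sq X Ri Rm) (Aset X Ri a) (Aset X Ri b)).
      { apply cls_set_ext. intros x. rewrite AC. unfold rimp. split.
        * intros H D HD'. apply SC in HD'. destruct HD' as [y [[w [H1 H2]] ->]].
          intros Ha. apply AC in Ha. apply AC. destruct (H w H1 y H2) as [H'|H']; [contradiction|auto].
        * intros H w Hxw y Hwy. unfold setU, setC.
          destruct (classic (box Ri a y)) as [Ha|Ha]; [right|left; auto].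
          apply AC. apply H; [apply SC; exists y; split; [exists w; auto|reflexivity]| apply AC; auto]. }
      rewrite -E. apply rhoP; auto.
  - apply rho_compact with Rm; auto.
  - intros C D. destruct (cls_rep X Ri C) as [x ->]. destruct (cls_rep X Ri D) as [y ->].
    rewrite LC. intros Hn.
    assert (H : ~ forall a, P a -> box Ri a x -> a y) by (intros H; apply Hn, Ti, H).
    apply not_all_ex_not in H. destruct H as [a H].
    assert (Pa : P a) by (apply NNPP; intro; apply H; intros; contradiction).
    assert (Hax : box Ri a x) by (apply NNPP; intro; apply H; intros; contradiction).
    assert (nay : ~ a y) by (intro; apply H; intros; assumption).
    exists (Aset X Ri a). split; [apply rhoP; auto|]. rewrite !AC. split; [exact Hax|intros Hb; apply nay, Hb, Hr].
  - intros C D. destruct (cls_rep X Ri C) as [x ->]. destruct (cls_rep X Ri D) as [y ->].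
    intros Hn.
    assert (Hn' : forall y', simR X Ri y' y -> ~ Rmstar X Ri Rm x y').
    { intros y' Hs HR. apply Hn. exists x, y. split; auto. split; auto. exists y'. auto. }
    destruct (sep_lemma X Ri Rm P HD0 x y Hn') as [a [b [Pa [Pb [Ha [Hb Hab]]]]]].
    exists (Aset X Ri a), (Aset X Ri b). split; auto. split; auto. split; [|split].
    + intros D HD'. apply SC in HD'. destruct HD' as [y' [Hxy' ->]].
      rewrite !AC. apply Hab; auto.
    + apply AC; auto.
    + rewrite AC; auto.
Qed.

Theorem proposition4p10 :
  (forall (X : Type) (le sq : X -> X -> Prop) (P : (X -> Prop) -> Prop),
     descriptive_mframe le sq P ->
     descriptive_S4K le sq (gen_BA P)) /\
  (forall (X : Type) (Ri Rm : X -> X -> Prop) (P : (X -> Prop) -> Prop),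
     descriptive_S4K Ri Rm P ->
     descriptive_mframe (rho_le X Ri) (rho_sq X Ri Rm) (rho_P X Ri P)).
Proof.
  split.
  - exact part1.
  - exact part2.
Qed.
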